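(* Let $G$ be a torsion group and $M$ a finitely generated $\mathbb{B}[G]$-module. Then each orbit of the $G$-action on the poset of join-irreducible elements of $M$ forms an antichain; i.e. for each join-irreducible $v\in M$ and $g,h\in G$, $gv\le hv$ implies $gv=hv$.
   Context: $\mathbb{B}=\{0,1\}$ is the Boolean semifield with $1+1=1$; $\mathbb{B}[G]$ is the group semiring. A $\mathbb{B}$-module is partially ordered by $x\le y$ iff $x+y=y$ (sum is the join). An element $v$ is join-irreducible if $v\neq0$ and $v=a+b$ implies $v=a$ or $v=b$. A torsion group is one in which every element has finite order. *)

(* Defs.v *)
(* A B[G]-module is encoded as a commutative idempotent monoid
   (M, add, zero) -- i.e. a B-module -- with an action of the group G by
   B-module endomorphisms; B[G]-scalars (finite formal sums of group
   elements) then act by  (sum g_i) . x = sum (g_i . x). *)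
From Stdlib Require Import List.
Import ListNotations.

Definition is_group {G : Type} (mul : G -> G -> G) (one : G) (inv : G -> G) : Prop :=
  (forall a b c, mul a (mul b c) = mul (mul a b) c) /\
  (forall a, mul one a = a) /\ (forall a, mul a one = a) /\
  (forall a, mul (inv a) a = one) /\ (forall a, mul a (inv a) = one).

Fixpoint gpow {G : Type} (mul : G -> G -> G) (one : G) (g : G) (n : nat) : G :=
  match n with
  | O => one
  | S k => mul g (gpow mul one g k)
  end.

Definition is_torsion {G : Type} (mul : G -> G -> G) (one : G) : Prop :=
  forall g : G, exists n : nat, 0 < n /\ gpow mul one g n = one.

(* B-module: commutative monoid in which 1+1=1 forces x + x = x *)
Definition is_Bmodule {M : Type} (add : M -> M -> M) (zero : M) : Prop :=
  (forall x y z, add x (add y z) = add (add x y) z) /\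
  (forall x y, add x y = add y x) /\
  (forall x, add zero x = x) /\
  (forall x, add x x = x).

Definition is_BG_action {G M : Type} (mul : G -> G -> G) (one : G)
    (add : M -> M -> M) (zero : M) (act : G -> M -> M) : Prop :=
  (forall x, act one x = x) /\
  (forall g h x, act (mul g h) x = act g (act h x)) /\
  (forall g x y, act g (add x y) = add (act g x) (act g y)) /\
  (forall g, act g zero = zero).

Definition lin_comb {G M : Type} (add : M -> M -> M) (zero : M)
    (act : G -> M -> M) (l : list (G * M)) : M :=
  fold_right (fun p acc => add (act (fst p) (snd p)) acc) zero l.

Definition BG_fin_gen {G M : Type} (add : M -> M -> M) (zero : M)
    (act : G -> M -> M) : Prop :=
  exists gens : list M, forall x : M,
    exists l : list (G * M), (forall p, In p l -> In (snd p) gens) /\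
      x = lin_comb add zero act l.

Definition Ble {M : Type} (add : M -> M -> M) (x y : M) : Prop := add x y = y.

Definition join_irreducible {M : Type} (add : M -> M -> M) (zero : M) (v : M) : Prop :=
  v <> zero /\ forall a b, v = add a b -> v = a \/ v = b.

(* Main.v *)
Require Import Defs.
From Stdlib Require Import List.

Theorem lemma4p11 (G M : Type) (mul : G -> G -> G) (one : G) (inv : G -> G)
    (add : M -> M -> M) (zero : M) (act : G -> M -> M) :
  is_group mul one inv ->
  is_torsion mul one ->
  is_Bmodule add zero ->
  is_BG_action mul one add zero act ->
  BG_fin_gen add zero act ->
  forall (v : M) (g h : G), join_irreducible add zero v ->
    Ble add (act g v) (act h v) -> act g v = act h v.
Proof.
  intros [gA [g1l [g1r [gVl gVr]]]] Htor [aA [aC [a0 aI]]] [act1 [actM [actD act0]]] _ v g h _ Hle.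
  unfold Ble in *.
  assert (mono : forall a x y, add x y = y -> add (act a x) (act a y) = act a y).
  { intros a x y H. rewrite <- actD, H. reflexivity. }
  assert (trans : forall x y z, add x y = y -> add y z = z -> add x z = z).
  { intros x y z H1 H2. rewrite <- H2, aA, H1. reflexivity. }
  set (k := mul (inv g) h).
  assert (Hv : add v (act k v) = act k v).
  { pose proof (mono (inv g) _ _ Hle) as H.
    unfold k; rewrite actM.
    rewrite <- actM, gVl, act1 in H. exact H. }
  assert (Hch : forall m, add v (act (gpow mul one k m) v) = act (gpow mul one k m) v).
  { induction m as [|m IH]; simpl.
    - rewrite act1; apply aI.
    - rewrite actM. apply (trans _ (act k v)); [exact Hv|].
      apply mono. exact IH. }
  destruct (Htor k) as [n [Hn Hkn]].
  destruct n as [|m]; [inversion Hn|].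
  pose proof (mono k _ _ (Hch m)) as H.
  rewrite <- actM in H. change (mul k (gpow mul one k m)) with (gpow mul one k (S m)) in H.
  rewrite Hkn, act1 in H.
  assert (E : v = act k v) by (transitivity (add (act k v) v); [symmetry; exact H | rewrite aC; exact Hv]).
  rewrite E at 1. unfold k. rewrite <- actM, gA, gVr, g1l. reflexivity.
Qed.
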